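(* Under the hypotheses of Proposition 1 — namely $\boldsymbol{S}\in\mathrm{Mat}(M,M,\mathbb{C})$ invertible, $\boldsymbol{U}\in\mathrm{Mat}(m,M,\mathbb{C})$, $\boldsymbol{V}\in\mathrm{Mat}(M,m,\mathbb{C})$, $\boldsymbol{K}$ satisfying $\boldsymbol{S}\boldsymbol{K}+\boldsymbol{K}\boldsymbol{S}=\boldsymbol{V}\boldsymbol{U}$, $\boldsymbol{\Xi}=e^{-\boldsymbol{S}x-\boldsymbol{S}^{-1}y}$, $p_0$ a constant $m\times m$ matrix (or a function of $x$ only), and $$q=\boldsymbol{U}\boldsymbol{\Xi}\,(\boldsymbol{I}_M+(\boldsymbol{K}\boldsymbol{\Xi})^2)^{-1}\boldsymbol{V},\qquad p=p_0-\boldsymbol{U}\boldsymbol{\Xi}\boldsymbol{K}\boldsymbol{\Xi}\,(\boldsymbol{I}_M+(\boldsymbol{K}\boldsymbol{\Xi})^2)^{-1}\boldsymbol{V}$$ on an open set where $\boldsymbol{I}_M+(\boldsymbol{K}\boldsymbol{\Xi})^2$ is invertible — the identity $$(q_y)^2+(p_y)^2=p_y$$ holds (as an identity of $m\times m$ matrix functions).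
   Context: Subscripts $x,y$ denote partial derivatives with respect to the real variables $x,y$; $\boldsymbol{I}_M$ is the $M\times M$ identity matrix. *)

(* Defs.v *)
(* classical reals; complex numbers as pairs of reals,
   matrices as functions nat -> nat -> C with dimensions passed explicitly. *)
From Stdlib Require Import Reals Factorial.
Open Scope R_scope.

Definition C : Type := (R * R)%type.
Definition Re (z : C) : R := fst z.
Definition Im (z : C) : R := snd z.
Definition C0 : C := (0, 0).
Definition C1 : C := (1, 0).
Definition Cadd (a b : C) : C := (fst a + fst b, snd a + snd b).
Definition Cneg (a : C) : C := (- fst a, - snd a).
Definition Cmul (a b : C) : C :=
  (fst a * fst b - snd a * snd b, fst a * snd b + snd a * fst b).
Definition Crscal (r : R) (a : C) : C := (r * fst a, r * snd a).

(* ---------- matrices (entries indexed from 0) ---------- *)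
Definition Mat : Type := nat -> nat -> C.

Fixpoint csum (n : nat) (f : nat -> C) : C :=
  match n with O => C0 | S k => Cadd (csum k f) (f k) end.

Definition mmul (n : nat) (A B : Mat) : Mat :=
  fun i j => csum n (fun k => Cmul (A i k) (B k j)).
Definition madd (A B : Mat) : Mat := fun i j => Cadd (A i j) (B i j).
Definition mneg (A : Mat) : Mat := fun i j => Cneg (A i j).
Definition msub (A B : Mat) : Mat := madd A (mneg B).
Definition mrscal (r : R) (A : Mat) : Mat := fun i j => Crscal r (A i j).
Definition mid : Mat := fun i j => if Nat.eqb i j then C1 else C0.

Fixpoint mpow (n : nat) (A : Mat) (k : nat) : Mat :=
  match k with O => mid | S k' => mmul n A (mpow n A k') end.

Definition meq (r c : nat) (A B : Mat) : Prop :=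
  forall i j, (i < r)%nat -> (j < c)%nat -> A i j = B i j.

Definition is_inverse (n : nat) (A B : Mat) : Prop :=
  meq n n (mmul n A B) mid /\ meq n n (mmul n B A) mid.

Fixpoint mexp_partial (n : nat) (A : Mat) (N : nat) : Mat :=
  match N with
  | O => mid
  | S N' => madd (mexp_partial n A N') (mrscal (/ INR (fact N)) (mpow n A N))
  end.

Definition is_mexp (n : nat) (A E : Mat) : Prop :=
  forall i j, (i < n)%nat -> (j < n)%nat ->
    Un_cv (fun N => Re (mexp_partial n A N i j)) (Re (E i j)) /\
    Un_cv (fun N => Im (mexp_partial n A N i j)) (Im (E i j)).

Definition open2 (D : R -> R -> Prop) : Prop :=
  forall x y, D x y -> exists eps, 0 < eps /\
    forall x' y', (x' - x) ^ 2 + (y' - y) ^ 2 < eps ^ 2 -> D x' y'.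

Definition has_pderiv_y (r c : nat) (F : R -> R -> Mat) (x y : R) (Fy : Mat) : Prop :=
  forall i j, (i < r)%nat -> (j < c)%nat ->
    derivable_pt_lim (fun t => Re (F x t i j)) y (Re (Fy i j)) /\
    derivable_pt_lim (fun t => Im (F x t i j)) y (Im (Fy i j)).

(* ---------- the solution of Proposition 1 ----------
   Xi x y = exp(-S x - S^{-1} y);  W x y = (I_M + (K Xi)^2)^{-1}. *)
Definition q_sol (M : nat) (U V : Mat) (Xi W : R -> R -> Mat) (x y : R) : Mat :=
  mmul M (mmul M (mmul M U (Xi x y)) (W x y)) V.

Definition p_sol (M : nat) (p0 : R -> Mat) (U V K : Mat) (Xi W : R -> R -> Mat)
  (x y : R) : Mat :=
  msub (p0 x)
    (mmul M (mmul M (mmul M (mmul M (mmul M U (Xi x y)) K) (Xi x y)) (W x y)) V).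

(* Main.v *)
Require Import Defs.
From Stdlib Require Import Reals Factorial Lra Lia Psatz FunctionalExtensionality Setoid Morphisms.
Import Defs.
Open Scope R_scope.

Lemma Cext (a b : C) : fst a = fst b -> snd a = snd b -> a = b.
Proof. destruct a, b; simpl; intros; subst; reflexivity. Qed.

Ltac Csimp := unfold Cadd, Cneg, Cmul, Crscal, C0, C1 in *; cbn [fst snd] in *.
Ltac Ceq := apply Cext; Csimp; ring.

Lemma Mext (A B : Mat) : (forall i j, A i j = B i j) -> A = B.
Proof. intros H; apply functional_extensionality; intro i;
  apply functional_extensionality; intro j; apply H. Qed.

Definition mz : Mat := fun _ _ => C0.

Lemma csum_ext n f g : (forall k, (k < n)%nat -> f k = g k) -> csum n f = csum n g.
Proof. induction n; simpl; intros H; auto. rewrite IHn by (intros; apply H; lia).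
  rewrite H by lia; auto. Qed.

Lemma csum_add n f g : csum n (fun k => Cadd (f k) (g k)) = Cadd (csum n f) (csum n g).
Proof. induction n; simpl. Ceq. rewrite IHn. Ceq. Qed.

Lemma csum_neg n f : csum n (fun k => Cneg (f k)) = Cneg (csum n f).
Proof. induction n; simpl. Ceq. rewrite IHn. Ceq. Qed.

Lemma csum_mull n a f : csum n (fun k => Cmul a (f k)) = Cmul a (csum n f).
Proof. induction n; simpl. Ceq. rewrite IHn. Ceq. Qed.

Lemma csum_mulr n a f : csum n (fun k => Cmul (f k) a) = Cmul (csum n f) a.
Proof. induction n; simpl. Ceq. rewrite IHn. Ceq. Qed.

Lemma csum_rscal n r f : csum n (fun k => Crscal r (f k)) = Crscal r (csum n f).
Proof. induction n; simpl. Ceq. rewrite IHn. Ceq. Qed.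

Lemma csum_zero n : csum n (fun _ => C0) = C0.
Proof. induction n; simpl. auto. rewrite IHn. Ceq. Qed.

Lemma csum_swap n p (f : nat -> nat -> C) :
  csum n (fun k => csum p (fun l => f k l)) = csum p (fun l => csum n (fun k => f k l)).
Proof. induction n; simpl. rewrite csum_zero; auto.
  rewrite IHn. rewrite <- csum_add. auto. Qed.

Lemma csum_delta n i f : (i < n)%nat ->
  csum n (fun k => Cmul (mid i k) (f k)) = f i.
Proof. induction n; intros H; simpl. lia.
  unfold mid at 2. destruct (Nat.eqb_spec i n).
  - subst. rewrite csum_ext with (g := fun _ => C0). rewrite csum_zero. Ceq.
    intros k Hk. unfold mid. destruct (Nat.eqb_spec n k). lia. Ceq.
  - rewrite IHn by lia. Ceq. Qed.

Lemma csum_delta_r n j f : (j < n)%nat ->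
  csum n (fun k => Cmul (f k) (mid k j)) = f j.
Proof. intros H. rewrite <- (csum_delta n j f H). apply csum_ext; intros k _.
  unfold mid. destruct (Nat.eqb_spec j k), (Nat.eqb_spec k j); try lia; Ceq. Qed.

Lemma mmul_assoc n p A B Cm : mmul n (mmul p A B) Cm = mmul p A (mmul n B Cm).
Proof. apply Mext; intros i j; unfold mmul.
  rewrite (csum_ext n _ (fun l => csum p (fun k => Cmul (A i k) (Cmul (B k l) (Cm l j))))).
  2:{ intros l _. rewrite <- csum_mulr. apply csum_ext; intros. Ceq. }
  rewrite csum_swap. apply csum_ext; intros. rewrite csum_mull. auto. Qed.

Lemma mmul_addl n A B Cm : mmul n (madd A B) Cm = madd (mmul n A Cm) (mmul n B Cm).
Proof. apply Mext; intros i j; unfold mmul, madd. rewrite <- csum_add.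
  apply csum_ext; intros; Ceq. Qed.
Lemma mmul_addr n A B Cm : mmul n Cm (madd A B) = madd (mmul n Cm A) (mmul n Cm B).
Proof. apply Mext; intros i j; unfold mmul, madd. rewrite <- csum_add.
  apply csum_ext; intros; Ceq. Qed.
Lemma mmul_negl n A B : mmul n (mneg A) B = mneg (mmul n A B).
Proof. apply Mext; intros i j; unfold mmul, mneg. rewrite <- csum_neg.
  apply csum_ext; intros; Ceq. Qed.
Lemma mmul_negr n A B : mmul n A (mneg B) = mneg (mmul n A B).
Proof. apply Mext; intros i j; unfold mmul, mneg. rewrite <- csum_neg.
  apply csum_ext; intros; Ceq. Qed.
Lemma mmul_subl n A B Cm : mmul n (msub A B) Cm = msub (mmul n A Cm) (mmul n B Cm).
Proof. unfold msub. rewrite mmul_addl, mmul_negl. auto. Qed.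
Lemma mmul_subr n A B Cm : mmul n Cm (msub A B) = msub (mmul n Cm A) (mmul n Cm B).
Proof. unfold msub. rewrite mmul_addr, mmul_negr. auto. Qed.
Lemma mmul_scall n r A B : mmul n (mrscal r A) B = mrscal r (mmul n A B).
Proof. apply Mext; intros i j; unfold mmul, mrscal. rewrite <- csum_rscal.
  apply csum_ext; intros; Ceq. Qed.
Lemma mmul_scalr n r A B : mmul n A (mrscal r B) = mrscal r (mmul n A B).
Proof. apply Mext; intros i j; unfold mmul, mrscal. rewrite <- csum_rscal.
  apply csum_ext; intros; Ceq. Qed.
Lemma mmul_zl n A : mmul n mz A = mz.
Proof. apply Mext; intros i j; unfold mmul, mz.
  transitivity (csum n (fun _ => C0)); [apply csum_ext; intros; Ceq | apply csum_zero]. Qed.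
Lemma mmul_zr n A : mmul n A mz = mz.
Proof. apply Mext; intros i j; unfold mmul, mz.
  transitivity (csum n (fun _ => C0)); [apply csum_ext; intros; Ceq | apply csum_zero]. Qed.
Lemma madd_zl A : madd mz A = A.
Proof. apply Mext; intros; unfold madd, mz; Ceq. Qed.
Lemma madd_zr A : madd A mz = A.
Proof. apply Mext; intros; unfold madd, mz; Ceq. Qed.

#[export] Instance meq_equiv r c : Equivalence (meq r c).
Proof. split; unfold meq; [intros A i j; auto | intros A B H i j Hi Hj; symmetry; auto
  | intros A B D H1 H2 i j Hi Hj; rewrite H1, H2; auto]. Qed.

#[export] Instance madd_proper r c : Proper (meq r c ==> meq r c ==> meq r c) madd.
Proof. intros A A' H B B' H' i j Hi Hj; unfold madd; rewrite H, H'; auto. Qed.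
#[export] Instance mneg_proper r c : Proper (meq r c ==> meq r c) mneg.
Proof. intros A A' H i j Hi Hj; unfold mneg; rewrite H; auto. Qed.
#[export] Instance msub_proper r c : Proper (meq r c ==> meq r c ==> meq r c) msub.
Proof. intros A A' H B B' H'; unfold msub; rewrite H, H'; reflexivity. Qed.
#[export] Instance mrscal_proper r c a : Proper (meq r c ==> meq r c) (mrscal a).
Proof. intros A A' H i j Hi Hj; unfold mrscal; rewrite H; auto. Qed.
#[export] Instance mmul_proper r n c : Proper (meq r n ==> meq n c ==> meq r c) (mmul n).
Proof. intros A A' H B B' H' i j Hi Hj; unfold mmul; apply csum_ext; intros k Hk.
  rewrite H, H'; auto. Qed.

Lemma mid_l n A : meq n n (mmul n mid A) A.
Proof. intros i j Hi Hj; unfold mmul; apply (csum_delta n i (fun k => A k j)); auto. Qed.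
Lemma mid_r n A : meq n n (mmul n A mid) A.
Proof. intros i j Hi Hj; unfold mmul; apply (csum_delta_r n j (fun k => A i k)); auto. Qed.
Lemma cancel_l n A B X : meq n n (mmul n A B) mid -> meq n n (mmul n A (mmul n B X)) X.
Proof. intros H. rewrite <- mmul_assoc, H. apply mid_l. Qed.


Definition cn (z : C) : R := Rabs (fst z) + Rabs (snd z).
Fixpoint rsum (n : nat) (f : nat -> R) : R :=
  match n with O => 0 | S k => rsum k f + f k end.
Definition mn (r c : nat) (A : Mat) : R := rsum r (fun i => rsum c (fun j => cn (A i j))).

Lemma rsum_ext n f g : (forall k, (k < n)%nat -> f k = g k) -> rsum n f = rsum n g.
Proof. induction n; simpl; intros H; auto. rewrite IHn by (intros; apply H; lia).
  rewrite H by lia; auto. Qed.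
Lemma rsum_le n f g : (forall k, (k < n)%nat -> f k <= g k) -> rsum n f <= rsum n g.
Proof. induction n; simpl; intros H. lra. assert (f n <= g n) by (apply H; lia).
  assert (rsum n f <= rsum n g) by (apply IHn; intros; apply H; lia). lra. Qed.
Lemma rsum_nonneg n f : (forall k, (k < n)%nat -> 0 <= f k) -> 0 <= rsum n f.
Proof. induction n; simpl; intros H. lra. assert (0 <= f n) by (apply H; lia).
  assert (0 <= rsum n f) by (apply IHn; intros; apply H; lia). lra. Qed.
Lemma rsum_add n f g : rsum n (fun k => f k + g k) = rsum n f + rsum n g.
Proof. induction n; simpl. lra. rewrite IHn; lra. Qed.
Lemma rsum_scal n a f : rsum n (fun k => a * f k) = a * rsum n f.
Proof. induction n; simpl. lra. rewrite IHn; lra. Qed.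
Lemma rsum_zero n : rsum n (fun _ => 0) = 0.
Proof. induction n; simpl; lra. Qed.
Lemma rsum_swap n p (f : nat -> nat -> R) :
  rsum n (fun k => rsum p (fun l => f k l)) = rsum p (fun l => rsum n (fun k => f k l)).
Proof. induction n; simpl. rewrite rsum_zero; auto.
  rewrite IHn. rewrite <- rsum_add. auto. Qed.
Lemma rsum_term n f k : (forall k, (k < n)%nat -> 0 <= f k) -> (k < n)%nat -> f k <= rsum n f.
Proof. induction n; simpl; intros H Hk. lia.
  assert (0 <= f n) by (apply H; lia).
  assert (0 <= rsum n f) by (apply rsum_nonneg; intros; apply H; lia).
  destruct (Nat.eq_dec k n). subst; lra.
  assert (f k <= rsum n f) by (apply IHn; [intros; apply H; lia | lia]). lra. Qed.

Lemma cn_nonneg z : 0 <= cn z.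
Proof. unfold cn. pose proof (Rabs_pos (fst z)); pose proof (Rabs_pos (snd z)); lra. Qed.
Lemma cn_add a b : cn (Cadd a b) <= cn a + cn b.
Proof. unfold cn, Cadd; simpl.
  pose proof (Rabs_triang (fst a) (fst b)); pose proof (Rabs_triang (snd a) (snd b)); lra. Qed.
Lemma cn_neg a : cn (Cneg a) = cn a.
Proof. unfold cn, Cneg; simpl. rewrite !Rabs_Ropp; auto. Qed.
Lemma cn_rscal r a : cn (Crscal r a) = Rabs r * cn a.
Proof. unfold cn, Crscal; simpl. rewrite !Rabs_mult; ring. Qed.
Lemma cn_mul a b : cn (Cmul a b) <= cn a * cn b.
Proof. unfold cn, Cmul; simpl. destruct a as [a1 a2], b as [b1 b2]; simpl.
  pose proof (Rabs_triang (a1*b1) (- (a2*b2))).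
  pose proof (Rabs_triang (a1*b2) (a2*b1)).
  unfold Rminus. rewrite Rabs_Ropp in H. rewrite !Rabs_mult in *.
  pose proof (Rabs_pos a1); pose proof (Rabs_pos a2); pose proof (Rabs_pos b1);
  pose proof (Rabs_pos b2). nra. Qed.
Lemma cn_C0 : cn C0 = 0.
Proof. unfold cn, C0; simpl. rewrite Rabs_R0; lra. Qed.
Lemma cn_csum n f : cn (csum n f) <= rsum n (fun k => cn (f k)).
Proof. induction n; simpl. rewrite cn_C0; lra.
  pose proof (cn_add (csum n f) (f n)). lra. Qed.

Lemma mn_nonneg r c A : 0 <= mn r c A.
Proof. unfold mn. apply rsum_nonneg; intros; apply rsum_nonneg; intros; apply cn_nonneg. Qed.
Lemma mn_add r c A B : mn r c (madd A B) <= mn r c A + mn r c B.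
Proof. unfold mn. rewrite <- rsum_add. apply rsum_le; intros. rewrite <- rsum_add.
  apply rsum_le; intros. apply cn_add. Qed.
Lemma mn_neg r c A : mn r c (mneg A) = mn r c A.
Proof. unfold mn. apply rsum_ext; intros; apply rsum_ext; intros. apply cn_neg. Qed.
Lemma mn_sub r c A B : mn r c (msub A B) <= mn r c A + mn r c B.
Proof. unfold msub. rewrite <- (mn_neg r c B). apply mn_add. Qed.
Lemma mn_rscal r c a A : mn r c (mrscal a A) = Rabs a * mn r c A.
Proof. unfold mn. rewrite <- rsum_scal. apply rsum_ext; intros. rewrite <- rsum_scal.
  apply rsum_ext; intros. apply cn_rscal. Qed.
Lemma mn_entry r c A i j : (i < r)%nat -> (j < c)%nat -> cn (A i j) <= mn r c A.
Proof. intros. unfold mn.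
  apply Rle_trans with (rsum c (fun j => cn (A i j))).
  apply (rsum_term c (fun j => cn (A i j))); auto; intros; apply cn_nonneg.
  apply (rsum_term r (fun i => rsum c (fun j => cn (A i j)))); auto.
  intros; apply rsum_nonneg; intros; apply cn_nonneg. Qed.
Lemma mn_meq r c A B : meq r c A B -> mn r c A = mn r c B.
Proof. intros H. unfold mn. apply rsum_ext; intros; apply rsum_ext; intros.
  rewrite H; auto. Qed.
Lemma mn_mz r c : mn r c mz = 0.
Proof. unfold mn, mz. rewrite <- (rsum_zero r). apply rsum_ext; intros.
  rewrite <- (rsum_zero c). apply rsum_ext; intros. apply cn_C0. Qed.
Lemma mn_mul r n c A B : mn r c (mmul n A B) <= mn r n A * mn n c B.
Proof. unfold mn at 1, mmul.
  apply Rle_trans with (rsum r (fun i => rsum n (fun k => cn (A i k) * mn n c B))).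
  - apply rsum_le; intros i Hi.
    apply Rle_trans with (rsum c (fun j => rsum n (fun k => cn (A i k) * cn (B k j)))).
    + apply rsum_le; intros j Hj. eapply Rle_trans. apply cn_csum.
      apply rsum_le; intros; apply cn_mul.
    + rewrite rsum_swap. apply rsum_le; intros k Hk. rewrite rsum_scal.
      apply Rmult_le_compat_l. apply cn_nonneg.
      apply (rsum_term n (fun k => rsum c (fun j => cn (B k j)))); auto.
      intros; apply rsum_nonneg; intros; apply cn_nonneg.
  - set (m := mn n c B). unfold mn. rewrite Rmult_comm, <- rsum_scal. apply rsum_le; intros i Hi.
    rewrite <- rsum_scal. apply Req_le, rsum_ext; intros; ring. Qed.
Lemma mn_zero_meq r c A : mn r c A = 0 -> meq r c A mz.
Proof. intros H i j Hi Hj. pose proof (mn_entry r c A i j Hi Hj). rewrite H in H0.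
  unfold cn in H0. pose proof (Rabs_pos (fst (A i j))); pose proof (Rabs_pos (snd (A i j))).
  assert (fst (A i j) = 0). { destruct (Req_dec (fst (A i j)) 0); auto.
    pose proof (Rabs_pos_lt _ H3). lra. }
  assert (snd (A i j) = 0). { destruct (Req_dec (snd (A i j)) 0); auto.
    pose proof (Rabs_pos_lt _ H4). lra. }
  unfold mz, C0; apply Cext; simpl; auto. Qed.
Lemma msub_zero_meq r c A B : meq r c (msub A B) mz -> meq r c A B.
Proof. intros H i j Hi Hj. specialize (H i j Hi Hj). unfold msub, madd, mneg, mz in H.
  apply Cext; Csimp; injection H; intros; lra. Qed.

Definition small (g : R -> R) : Prop := forall eps, 0 < eps -> exists d, 0 < d /\
  forall h, h <> 0 -> Rabs h < d -> g h < eps.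

Lemma small_plus f g : small f -> small g -> small (fun h => f h + g h).
Proof. intros Hf Hg eps He. destruct (Hf (eps/2)) as [d1 [Hd1 H1]]; try lra.
  destruct (Hg (eps/2)) as [d2 [Hd2 H2]]; try lra.
  exists (Rmin d1 d2); split. apply Rmin_pos; auto. intros h Hh Hd.
  pose proof (Rmin_l d1 d2); pose proof (Rmin_r d1 d2).
  specialize (H1 h Hh ltac:(lra)); specialize (H2 h Hh ltac:(lra)); lra. Qed.
Lemma small_scal c f : 0 <= c -> small f -> small (fun h => c * f h).
Proof. intros Hc Hf eps He. destruct (Hf (eps/(c+1))) as [d [Hd H]].
  apply Rdiv_lt_0_compat; lra.
  exists d; split; auto; intros h Hh Hhd. specialize (H h Hh Hhd).
  assert (eps / (c+1) * (c+1) = eps) by (field; lra).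
  destruct (Rle_dec 0 (f h)). nra. nra. Qed.
Lemma small_mul f g : (forall h, 0 <= f h) -> small f -> small g -> small (fun h => f h * g h).
Proof. intros Hp Hf Hg eps He. destruct (Hf 1) as [d1 [Hd1 H1]]; try lra.
  destruct (Hg eps) as [d2 [Hd2 H2]]; try lra.
  exists (Rmin d1 d2); split. apply Rmin_pos; auto. intros h Hh Hd.
  pose proof (Rmin_l d1 d2); pose proof (Rmin_r d1 d2).
  specialize (H1 h Hh ltac:(lra)); specialize (H2 h Hh ltac:(lra)). specialize (Hp h).
  destruct (Rle_dec 0 (g h)); nra. Qed.
Lemma small_le f g d0 : 0 < d0 -> (forall h, h <> 0 -> Rabs h < d0 -> f h <= g h) ->
  small g -> small f.
Proof. intros Hd0 Hle Hg eps He. destruct (Hg eps He) as [d [Hd H]].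
  exists (Rmin d0 d); split. apply Rmin_pos; auto. intros h Hh Hhd.
  pose proof (Rmin_l d0 d); pose proof (Rmin_r d0 d).
  specialize (H h Hh ltac:(lra)); specialize (Hle h Hh ltac:(lra)); lra. Qed.
Lemma small_abs : small Rabs.
Proof. intros eps He; exists eps; split; auto. Qed.
Lemma small_zero : small (fun _ => 0).
Proof. intros eps He; exists 1; split; auto; lra. Qed.

Definition mlim0 (r c : nat) (F : R -> Mat) (L : Mat) : Prop :=
  small (fun h => mn r c (msub (F h) L)).

Ltac Mring := apply Mext; intros; unfold msub, madd, mneg, mrscal, mz; Ceq.

Lemma mlim0_const r c A : mlim0 r c (fun _ => A) A.
Proof. unfold mlim0. replace (msub A A) with mz by Mring. rewrite mn_mz. apply small_zero. Qed.
Lemma mlim0_add r c F G L L' : mlim0 r c F L -> mlim0 r c G L' ->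
  mlim0 r c (fun h => madd (F h) (G h)) (madd L L').
Proof. unfold mlim0; intros H1 H2.
  apply (small_le _ (fun h => mn r c (msub (F h) L) + mn r c (msub (G h) L')) 1 Rlt_0_1).
  intros h _ _. replace (msub (madd (F h) (G h)) (madd L L')) with
    (madd (msub (F h) L) (msub (G h) L')) by Mring. apply mn_add.
  apply small_plus; auto. Qed.
Lemma mlim0_neg r c F L : mlim0 r c F L -> mlim0 r c (fun h => mneg (F h)) (mneg L).
Proof. unfold mlim0; intros H1.
  apply (small_le _ (fun h => mn r c (msub (F h) L)) 1 Rlt_0_1); auto.
  intros h _ _. replace (msub (mneg (F h)) (mneg L)) with (mneg (msub (F h) L)) by Mring.
  rewrite mn_neg; lra. Qed.
Lemma mlim0_sub r c F G L L' : mlim0 r c F L -> mlim0 r c G L' ->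
  mlim0 r c (fun h => msub (F h) (G h)) (msub L L').
Proof. intros. unfold msub at 1. apply mlim0_add; auto. apply mlim0_neg; auto. Qed.
Lemma mlim0_mul r n c F G L L' : mlim0 r n F L -> mlim0 n c G L' ->
  mlim0 r c (fun h => mmul n (F h) (G h)) (mmul n L L').
Proof. unfold mlim0; intros H1 H2.
  apply (small_le _ (fun h =>
     mn r n (msub (F h) L) * mn n c (msub (G h) L') +
     (mn n c L' * mn r n (msub (F h) L) + mn r n L * mn n c (msub (G h) L'))) 1 Rlt_0_1).
  - intros h _ _.
    replace (msub (mmul n (F h) (G h)) (mmul n L L')) with
      (madd (mmul n (msub (F h) L) (msub (G h) L'))
            (madd (mmul n (msub (F h) L) L') (mmul n L (msub (G h) L')))).
    2:{ rewrite !mmul_subl, !mmul_subr. apply Mext; intros.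
        unfold msub, madd, mneg. Ceq. }
    eapply Rle_trans. apply mn_add. eapply Rle_trans. apply Rplus_le_compat_l. apply mn_add.
    pose proof (mn_mul r n n (msub (F h) L) (msub (G h) L')).
    pose proof (mn_mul r n c (msub (F h) L) (msub (G h) L')).
    pose proof (mn_mul r n c (msub (F h) L) L').
    pose proof (mn_mul r n c L (msub (G h) L')). lra.
  - apply small_plus. apply small_mul; auto. intros; apply mn_nonneg.
    apply small_plus; apply small_scal; auto; apply mn_nonneg. Qed.
Lemma mlim0_near r c F G L d0 : 0 < d0 ->
  (forall h, h <> 0 -> Rabs h < d0 -> meq r c (F h) (G h)) ->
  mlim0 r c F L -> mlim0 r c G L.
Proof. unfold mlim0; intros Hd Heq H. apply (small_le _ (fun h => mn r c (msub (F h) L)) d0 Hd); auto.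
  intros h Hh Hhd. rewrite (mn_meq r c _ (msub (F h) L)). lra.
  rewrite Heq; auto. reflexivity. Qed.
Lemma mlim0_meq r c F L L' : meq r c L L' -> mlim0 r c F L -> mlim0 r c F L'.
Proof. unfold mlim0; intros He H. apply (small_le _ (fun h => mn r c (msub (F h) L)) 1 Rlt_0_1); auto.
  intros h _ _. rewrite (mn_meq r c (msub (F h) L') (msub (F h) L)). lra.
  rewrite He; reflexivity. Qed.

Definition dq (F : R -> Mat) (y h : R) : Mat := mrscal (/ h) (msub (F (y + h)) (F y)).
Definition dd (r c : nat) (F : R -> Mat) (y : R) (F' : Mat) : Prop := mlim0 r c (dq F y) F'.

Lemma dd_pderiv r c G x y F' : dd r c (G x) y F' -> has_pderiv_y r c G x y F'.
Proof. intros H i j Hi Hj.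
  assert (Hent : forall h, h <> 0 -> cn (msub (dq (G x) y h) F' i j) <= mn r c (msub (dq (G x) y h) F'))
    by (intros; apply mn_entry; auto).
  split; intros eps He; destruct (H eps He) as [d [Hd Hh]]; exists (mkposreal d Hd);
  intros h Hh0 Hhd; simpl in Hhd; specialize (Hh h Hh0 Hhd); specialize (Hent h Hh0);
  pose proof (Rle_lt_trans _ _ _ Hent Hh) as Hb; clear Hent Hh;
  unfold cn, dq, msub, madd, mneg, mrscal in Hb; Csimp; cbv beta;
  pose proof (Rabs_pos (/ h * (fst (G x (y + h) i j) + - fst (G x y i j)) + - fst (F' i j)));
  pose proof (Rabs_pos (/ h * (snd (G x (y + h) i j) + - snd (G x y i j)) + - snd (F' i j))).
  - replace ((Re (G x (y + h) i j) - Re (G x y i j)) / h - Re (F' i j)) with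
      (/ h * (fst (G x (y + h) i j) + - fst (G x y i j)) + - fst (F' i j))
      by (unfold Re, Rdiv; ring). lra.
  - replace ((Im (G x (y + h) i j) - Im (G x y i j)) / h - Im (F' i j)) with
      (/ h * (snd (G x (y + h) i j) + - snd (G x y i j)) + - snd (F' i j))
      by (unfold Im, Rdiv; ring). lra. Qed.

Lemma dd_meq r c F y F1 F2 : dd r c F y F1 -> meq r c F1 F2 -> dd r c F y F2.
Proof. intros H He. eapply mlim0_meq; eauto. Qed.

Lemma dd_cont r c F y F' : dd r c F y F' -> mlim0 r c (fun h => F (y + h)) (F y).
Proof. unfold dd, mlim0; intros H.
  apply (small_le _ (fun h => Rabs h * mn r c (msub (dq F y h) F') + mn r c F' * Rabs h) 1 Rlt_0_1).
  - intros h Hh _. replace (msub (F (y + h)) (F y)) with (mrscal h (dq F y h)).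
    rewrite mn_rscal. rewrite (Rmult_comm (mn r c F')), <- Rmult_plus_distr_l.
    apply Rmult_le_compat_l. apply Rabs_pos.
    replace (dq F y h) with (madd (msub (dq F y h) F') F') by Mring. 
    eapply Rle_trans. apply mn_add. replace (madd (msub (dq F y h) F') F') with (dq F y h) by Mring.
    lra. unfold dq. apply Mext; intros; unfold msub, madd, mneg, mrscal. apply Cext; Csimp; field; auto.
  - apply small_plus. apply small_mul; auto. intros; apply Rabs_pos. apply small_abs.
    apply small_scal. apply mn_nonneg. apply small_abs. Qed.


Lemma mlim0_ext r c F G L : (forall h, h <> 0 -> F h = G h) -> mlim0 r c F L -> mlim0 r c G L.
Proof. intros He. apply (mlim0_near r c F G L 1 Rlt_0_1). intros h Hh _. rewrite He; auto; reflexivity. Qed.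

Lemma dd_const r c A y : dd r c (fun _ => A) y mz.
Proof. unfold dd. apply (mlim0_ext r c (fun _ => mz)). intros h _. unfold dq. Mring.
  apply mlim0_const. Qed.
Lemma dd_add r c F G y F' G' : dd r c F y F' -> dd r c G y G' ->
  dd r c (fun t => madd (F t) (G t)) y (madd F' G').
Proof. unfold dd; intros H1 H2. apply (mlim0_ext r c (fun h => madd (dq F y h) (dq G y h))).
  intros h _. unfold dq. Mring. apply mlim0_add; auto. Qed.
Lemma dd_sub r c F G y F' G' : dd r c F y F' -> dd r c G y G' ->
  dd r c (fun t => msub (F t) (G t)) y (msub F' G').
Proof. unfold dd; intros H1 H2. apply (mlim0_ext r c (fun h => msub (dq F y h) (dq G y h))).
  intros h _. unfold dq. Mring. apply mlim0_sub; auto. Qed.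
Lemma dd_mul r n c A B y A' B' : dd r n A y A' -> dd n c B y B' ->
  dd r c (fun t => mmul n (A t) (B t)) y (madd (mmul n A' (B y)) (mmul n (A y) B')).
Proof. unfold dd; intros H1 H2.
  apply (mlim0_ext r c (fun h => madd (mmul n (dq A y h) (B (y + h))) (mmul n (A y) (dq B y h)))).
  - intros h _. unfold dq. rewrite mmul_scall, mmul_scalr, mmul_subl, mmul_subr.
    apply Mext; intros. unfold msub, madd, mneg, mrscal. Ceq.
  - apply mlim0_add. apply mlim0_mul; auto. apply (dd_cont n c B y B'); auto.
    apply mlim0_mul; auto. apply mlim0_const. Qed.

Lemma dd_inv n B W y B' eps : 0 < eps ->
  (forall h, Rabs h < eps -> is_inverse n (B (y + h)) (W (y + h))) -> dd n n B y B' ->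
  dd n n W y (mneg (mmul n (mmul n (W y) B') (W y))).
Proof. intros Heps Hinv HB.
  assert (key : forall h, Rabs h < eps -> meq n n (msub (W (y + h)) (W y))
     (mneg (mmul n (mmul n (W (y + h)) (msub (B (y + h)) (B y))) (W y)))).
  { intros h Hh. destruct (Hinv h Hh) as [Hl Hr].
    destruct (Hinv 0 ltac:(rewrite Rabs_R0; lra)) as [Hl0 Hr0]. rewrite Rplus_0_r in Hl0, Hr0.
    rewrite mmul_subr, mmul_subl, (mmul_assoc n n (W (y+h)) (B y) (W y)).
    rewrite Hr, Hl0, mid_l, mid_r. intros i j _ _; unfold msub, madd, mneg; Ceq. }
  assert (Hc : mlim0 n n (fun h => W (y + h)) (W y)).
  { pose proof (dd_cont n n B y B' HB) as HBc. unfold mlim0 in *.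
    set (w := mn n n (W y)). assert (0 <= w) by apply mn_nonneg.
    destruct (HBc (/(2*w+2))) as [d1 [Hd1 H1]]. apply Rinv_0_lt_compat; lra.
    apply (small_le _ (fun h => (2 * (w * w)) * mn n n (msub (B (y + h)) (B y))) (Rmin d1 eps)).
    apply Rmin_pos; auto.
    - intros h Hh Hhd. pose proof (Rmin_l d1 eps); pose proof (Rmin_r d1 eps).
      specialize (H1 h Hh ltac:(lra)).
      assert (ED : mn n n (msub (W (y + h)) (W y)) <= mn n n (mmul n (mmul n (W (y + h)) (msub (B (y + h)) (B y))) (W y))).
      { rewrite (mn_meq _ _ _ _ (key h ltac:(lra))), mn_neg. lra. }
      set (beta := mn n n (msub (B (y + h)) (B y))) in *.
      set (D := mn n n (msub (W (y + h)) (W y))).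
      assert (0 <= beta) by apply mn_nonneg. assert (0 <= D) by apply mn_nonneg.
      assert (HWh : mn n n (W (y+h)) <= D + w).
      { replace (W (y+h)) with (madd (msub (W (y + h)) (W y)) (W y)) by Mring. apply mn_add. }
      assert (E1 : mn n n (mmul n (mmul n (W (y + h)) (msub (B (y + h)) (B y))) (W y)) <= (D + w) * beta * w).
      { eapply Rle_trans. apply mn_mul. apply Rmult_le_compat_r; auto.
        eapply Rle_trans. apply mn_mul. apply Rmult_le_compat_r; auto. }
      assert (beta * w <= 1/2).
      { assert (beta * (2*w+2) <= 1). { apply Rmult_lt_compat_r with (r := 2*w+2) in H1; [|lra].
          rewrite Rinv_l in H1 by lra. lra. } nra. }
      assert (D * (beta * w) <= D * (1/2)) by (apply Rmult_le_compat_l; lra).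
      fold D in ED. nra.
    - apply small_scal. nra. auto. }
  unfold dd. apply (mlim0_near n n (fun h => mneg (mmul n (mmul n (W (y + h)) (dq B y h)) (W y))) _ _ eps Heps).
  - intros h Hh Hhd. unfold dq. rewrite (key h Hhd). rewrite mmul_scalr, mmul_scall.
    intros i j _ _. unfold mneg, mrscal. Ceq.
  - apply mlim0_neg. apply mlim0_mul. apply mlim0_mul; auto. apply mlim0_const. Qed.


Definition mcv (r c : nat) (u : nat -> Mat) (L : Mat) : Prop :=
  forall eps, 0 < eps -> exists N0, forall N, (N >= N0)%nat -> mn r c (msub (u N) L) < eps.

Lemma rsum_seq_small n (f : nat -> nat -> R) :
  (forall k, (k < n)%nat -> forall eps, 0 < eps -> exists N0, forall N, (N >= N0)%nat -> f N k < eps) ->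
  forall eps, 0 < eps -> exists N0, forall N, (N >= N0)%nat -> rsum n (f N) < eps.
Proof. induction n; intros H eps He. exists O; intros; simpl; lra.
  destruct (IHn (fun k Hk => H k ltac:(lia)) (eps/2)) as [N1 H1]; try lra.
  destruct (H n ltac:(lia) (eps/2)) as [N2 H2]; try lra.
  exists (Nat.max N1 N2); intros N HN. simpl.
  specialize (H1 N ltac:(lia)); specialize (H2 N ltac:(lia)). lra. Qed.

Lemma is_mexp_mcv n A E : is_mexp n A E -> mcv n n (mexp_partial n A) E.
Proof. intros H eps He. unfold mn.
  apply (rsum_seq_small n (fun N i => rsum n (fun j => cn (msub (mexp_partial n A N) E i j)))); auto.
  intros i Hi eps1 He1.
  apply (rsum_seq_small n (fun N j => cn (msub (mexp_partial n A N) E i j))); auto.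
  intros j Hj eps2 He2. destruct (H i j Hi Hj) as [H1 H2].
  destruct (H1 (eps2/2)) as [N1 G1]; try lra. destruct (H2 (eps2/2)) as [N2 G2]; try lra.
  exists (Nat.max N1 N2); intros N HN.
  specialize (G1 N ltac:(lia)); specialize (G2 N ltac:(lia)). unfold Rdist in *.
  unfold cn, msub, madd, mneg. Csimp. unfold Re, Im in *. unfold Rminus in *. lra. Qed.

Lemma le_eps a b : (forall eps, 0 < eps -> a <= b + eps) -> a <= b.
Proof. intros H. destruct (Rle_dec a b); auto. specialize (H ((a-b)/2) ltac:(lra)). lra. Qed.

Lemma mrscal_sub a X Y : mrscal a (msub X Y) = msub (mrscal a X) (mrscal a Y).
Proof. Mring. Qed.
Lemma mrscal_add a X Y : mrscal a (madd X Y) = madd (mrscal a X) (mrscal a Y).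
Proof. Mring. Qed.
Lemma mrscal_mrscal a b X : mrscal a (mrscal b X) = mrscal (a * b) X.
Proof. Mring. Qed.

Lemma comm_mpow n P A k : meq n n (mmul n P A) (mmul n A P) ->
  meq n n (mmul n P (mpow n A k)) (mmul n (mpow n A k) P).
Proof. intros H; induction k; simpl. rewrite mid_l, mid_r; reflexivity.
  rewrite <- mmul_assoc, H, !mmul_assoc, IHk. reflexivity. Qed.
Lemma comm_mexp n P A N : meq n n (mmul n P A) (mmul n A P) ->
  meq n n (mmul n P (mexp_partial n A N)) (mmul n (mexp_partial n A N) P).
Proof. intros H; induction N; simpl. rewrite mid_l, mid_r; reflexivity.
  rewrite mmul_addr, mmul_addl, mmul_scalr, mmul_scall, IHN, (comm_mpow n P A (S N) H). reflexivity. Qed.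
Lemma comm_Xi n P A X : meq n n (mmul n P A) (mmul n A P) -> is_mexp n A X ->
  meq n n (mmul n P X) (mmul n X P).
Proof. intros H HX. apply msub_zero_meq, mn_zero_meq.
  apply Rle_antisym; [| apply mn_nonneg]. apply le_eps; intros eps He.
  destruct (is_mexp_mcv n A X HX (eps / (2 * mn n n P + 1))) as [N0 HN].
  apply Rdiv_lt_0_compat; auto. pose proof (mn_nonneg n n P); lra.
  specialize (HN N0 ltac:(lia)). set (E := mexp_partial n A N0) in *.
  assert (Heq : meq n n (msub (mmul n P X) (mmul n X P))
     (madd (mneg (mmul n P (msub E X))) (mmul n (msub E X) P))).
  { unfold E. rewrite mmul_subr, mmul_subl. rewrite (comm_mexp n P A N0 H).
    intros i j _ _; unfold msub, madd, mneg; Ceq. }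
  rewrite (mn_meq _ _ _ _ Heq).
  eapply Rle_trans. apply mn_add. rewrite mn_neg.
  pose proof (mn_mul n n n P (msub E X)); pose proof (mn_mul n n n (msub E X) P).
  pose proof (mn_nonneg n n P). pose proof (mn_nonneg n n (msub E X)).
  assert (mn n n (msub E X) * (2 * mn n n P + 1) <= eps).
  { apply Rmult_lt_compat_r with (r := 2 * mn n n P + 1) in HN; [|lra].
    unfold Rdiv in HN. rewrite Rmult_assoc, Rinv_l in HN by lra. lra. }
  nra. Qed.

Lemma mn_pow n A k c : mn n n A <= c -> mn n n (mpow n A k) <= mn n n mid * c ^ k.
Proof. intros H. assert (0 <= c) by (pose proof (mn_nonneg n n A); lra).
  induction k; simpl. lra. eapply Rle_trans. apply mn_mul.
  pose proof (mn_nonneg n n (mpow n A k)). pose proof (mn_nonneg n n mid).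
  pose proof (pow_le c k H0). nra. Qed.

Lemma INR_le_pow2 k : INR k <= 2 ^ k.
Proof. induction k. simpl; lra. rewrite S_INR. simpl. pose proof (pow_R1_Rle 2 k ltac:(lra)). lra. Qed.
Lemma INR_sq_le_pow4 k : INR k ^ 2 <= 4 ^ k.
Proof. replace 4 with (2 * 2) by lra. rewrite Rpow_mult_distr. pose proof (INR_le_pow2 k).
  pose proof (pos_INR k). simpl. nra. Qed.

Lemma exp_partial_le z N : 0 <= z -> sum_f_R0 (fun k => / INR (fact k) * z ^ k) N <= exp z.
Proof. intros Hz. apply (growing_ineq (E1 z)); [| apply E1_cvg].
  intros m. unfold E1. rewrite tech5. pose proof (pow_le z (S m) Hz).
  pose proof (INR_fact_lt_0 (S m)). assert (0 <= / INR (fact (S m))).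
  apply Rlt_le, Rinv_0_lt_compat; lra. nra. Qed.


Definition Dk n A0 B h k := msub (mpow n (madd A0 (mrscal h B)) k) (mpow n A0 k).
Definition Rk n A0 B h k :=
  msub (Dk n A0 B h k) (mrscal (INR k * h) (mmul n B (mpow n A0 (pred k)))).
Definition Yk n A0 B h N :=
  msub (msub (mexp_partial n (madd A0 (mrscal h B)) (S N)) (mexp_partial n A0 (S N)))
       (mrscal h (mmul n B (mexp_partial n A0 N))).

Lemma D_step n A0 B h k : Dk n A0 B h (S k) =
  madd (mmul n (madd A0 (mrscal h B)) (Dk n A0 B h k)) (mmul n (mrscal h B) (mpow n A0 k)).
Proof. unfold Dk; cbn [mpow]. rewrite mmul_subr, !mmul_addl, !mmul_scall. Mring. Qed.

Lemma R_step n A0 B h k : Rk n A0 B h (S k) =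
  madd (madd (mmul n A0 (Rk n A0 B h k)) (mmul n (mrscal h B) (Dk n A0 B h k)))
   (mrscal (INR k * h) (msub (mmul n A0 (mmul n B (mpow n A0 (pred k)))) (mmul n B (mpow n A0 k)))).
Proof. unfold Rk. rewrite D_step. unfold Dk. cbn [pred].
  rewrite ?mmul_subr, ?mmul_subl, ?mmul_addl, ?mmul_addr, ?mmul_scall, ?mmul_scalr, ?mmul_assoc.
  rewrite S_INR. Mring. Qed.

Lemma Y_step n A0 B h N : Yk n A0 B h (S N) =
  madd (Yk n A0 B h N) (mrscal (/ INR (fact (S (S N)))) (Rk n A0 B h (S (S N)))).
Proof. unfold Yk, Rk, Dk. cbn [mexp_partial pred].
  rewrite !mmul_addr, !mmul_scalr, !mrscal_sub, !mrscal_mrscal.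
  assert (Hf : / INR (fact (S (S N))) * (INR (S (S N)) * h) = h * / INR (fact (S N))).
  { replace (fact (S (S N))) with (S (S N) * fact (S N))%nat by reflexivity.
    rewrite mult_INR. field. split. apply INR_fact_neq_0. apply not_0_INR; lia. }
  rewrite Hf. Mring. Qed.

Lemma Y_zero n A0 B h : Yk n A0 B h 0 = mz.
Proof. unfold Yk. cbn [mexp_partial mpow].
  replace (/ INR (fact 1)) with 1 by (simpl; field).
  rewrite !mmul_addl, !mmul_scall. Mring. Qed.

Lemma R_zero n A0 B h : Rk n A0 B h 0 = mz.
Proof. unfold Rk, Dk. cbn [mpow]. change (INR 0) with 0. Mring. Qed.

Lemma sum_nonneg f N : (forall k, 0 <= f k) -> 0 <= sum_f_R0 f N.
Proof. intros H; induction N; simpl. apply H. pose proof (H (S N)); lra. Qed.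

Lemma mn_Ap n A0 B h : Rabs h <= 1 ->
  mn n n (madd A0 (mrscal h B)) <= mn n n A0 + mn n n B + 1.
Proof. intros Hh. eapply Rle_trans. apply mn_add. rewrite mn_rscal.
  pose proof (mn_nonneg n n B). pose proof (Rabs_pos h). nra. Qed.

Lemma D_bound n A0 B h k : Rabs h <= 1 ->
  mn n n (Dk n A0 B h k) <= INR k * (Rabs h * mn n n B * mn n n mid) *
     (mn n n A0 + mn n n B + 1) ^ k.
Proof. intros Hh. set (c := mn n n A0 + mn n n B + 1).
  assert (Ha : 0 <= mn n n A0) by apply mn_nonneg. assert (Hb : 0 <= mn n n B) by apply mn_nonneg.
  assert (Hm : 0 <= mn n n mid) by apply mn_nonneg. assert (Hc : 1 <= c) by (unfold c; lra).
  pose proof (Rabs_pos h).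
  set (t := Rabs h * mn n n B * mn n n mid). assert (Ht : 0 <= t) by (unfold t; repeat apply Rmult_le_pos; auto).
  induction k.
  - unfold Dk. cbn [mpow]. replace (msub mid mid) with mz by Mring. rewrite mn_mz. simpl. lra.
  - rewrite D_step. eapply Rle_trans. apply mn_add.
    pose proof (mn_mul n n n (madd A0 (mrscal h B)) (Dk n A0 B h k)) as G1.
    pose proof (mn_mul n n n (mrscal h B) (mpow n A0 k)) as G2.
    pose proof (mn_Ap n A0 B h Hh) as G3. fold c in G3.
    pose proof (mn_pow n A0 k c ltac:(unfold c; lra)) as G4.
    rewrite mn_rscal in G2. pose proof (mn_nonneg n n (Dk n A0 B h k)).
    pose proof (mn_nonneg n n (mpow n A0 k)).
    assert (Hck : 1 <= c ^ k) by (apply pow_R1_Rle; lra).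
    pose proof (pos_INR k). rewrite S_INR. simpl.
    assert (mn n n (madd A0 (mrscal h B)) * mn n n (Dk n A0 B h k) <= c * (INR k * t * c ^ k)).
    { apply Rmult_le_compat; auto. apply mn_nonneg. }
    assert (Rabs h * mn n n B * mn n n (mpow n A0 k) <= t * c ^ k).
    { apply Rle_trans with (Rabs h * mn n n B * (mn n n mid * c ^ k)).
      apply Rmult_le_compat_l. apply Rmult_le_pos; auto. exact G4. unfold t; right; ring. }
    assert (t * c ^ k <= t * (c * c ^ k)).
    { apply Rmult_le_compat_l; auto. nra. }
    nra. Qed.

Lemma R_bound n A0 B h k : Rabs h <= 1 -> meq n n (mmul n A0 B) (mmul n B A0) ->
  mn n n (Rk n A0 B h k) <= INR k ^ 2 * (Rabs h * Rabs h * mn n n B * mn n n B * mn n n mid) *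
     (mn n n A0 + mn n n B + 1) ^ k.
Proof. intros Hh Hcomm. set (c := mn n n A0 + mn n n B + 1).
  assert (Ha : 0 <= mn n n A0) by apply mn_nonneg. assert (Hb : 0 <= mn n n B) by apply mn_nonneg.
  assert (Hm : 0 <= mn n n mid) by apply mn_nonneg. assert (Hc : 1 <= c) by (unfold c; lra).
  pose proof (Rabs_pos h).
  set (s := Rabs h * Rabs h * mn n n B * mn n n B * mn n n mid).
  assert (Hs : 0 <= s) by (unfold s; repeat apply Rmult_le_pos; auto).
  induction k.
  - rewrite R_zero, mn_mz. simpl. lra.
  - rewrite R_step. eapply Rle_trans. apply mn_add.
    assert (Hcorr : mn n n (mrscal (INR k * h) (msub (mmul n A0 (mmul n B (mpow n A0 (pred k))))
                     (mmul n B (mpow n A0 k)))) = 0).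
    { rewrite mn_rscal. destruct k. simpl. rewrite Rmult_0_l, Rabs_R0. lra.
      cbn [pred mpow]. rewrite (mn_meq _ _ _ mz). rewrite mn_mz; lra.
      rewrite <- mmul_assoc, Hcomm, mmul_assoc. intros i j _ _; unfold msub, madd, mneg, mz; Ceq. }
    rewrite Hcorr. eapply Rle_trans. apply Rplus_le_compat_r. apply mn_add.
    pose proof (mn_mul n n n A0 (Rk n A0 B h k)) as G1.
    pose proof (mn_mul n n n (mrscal h B) (Dk n A0 B h k)) as G2. rewrite mn_rscal in G2.
    pose proof (D_bound n A0 B h k Hh) as G3. fold c in G3.
    pose proof (mn_nonneg n n (Rk n A0 B h k)). pose proof (mn_nonneg n n (Dk n A0 B h k)).
    assert (Hck : 1 <= c ^ k) by (apply pow_R1_Rle; lra).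
    pose proof (pos_INR k). rewrite S_INR. simpl.
    assert (E1 : mn n n A0 * mn n n (Rk n A0 B h k) <= c * (INR k ^ 2 * s * c ^ k)).
    { apply Rmult_le_compat; auto. unfold c; lra. }
    assert (E2 : Rabs h * mn n n B * mn n n (Dk n A0 B h k) <= INR k * s * c ^ k).
    { apply Rle_trans with (Rabs h * mn n n B * (INR k * (Rabs h * mn n n B * mn n n mid) * c ^ k)).
      apply Rmult_le_compat_l; auto. apply Rmult_le_pos; auto. unfold s; right; ring. }
    assert (E3 : INR k * s * c ^ k <= INR k * s * (c * c ^ k)).
    { apply Rmult_le_compat_l. apply Rmult_le_pos; auto. nra. }
    simpl in E1. set (u := INR k) in *. set (v := s * (c * c ^ k)).
    assert (Hv : 0 <= v) by (unfold v; apply Rmult_le_pos; auto; nra).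
    assert (c * (u * (u * 1) * s * c ^ k) = u * u * v) by (unfold v; ring).
    assert (u * s * (c * c ^ k) = u * v) by (unfold v; ring).
    assert ((u + 1) * ((u + 1) * 1) * s * (c * c ^ k) = (u+1)*(u+1)*v) by (unfold v; ring).
    assert (0 <= (u + 1) * v) by (apply Rmult_le_pos; lra).
    nra. Qed.

Lemma Y_bound n A0 B h N : Rabs h <= 1 -> meq n n (mmul n A0 B) (mmul n B A0) ->
  mn n n (Yk n A0 B h N) <= (Rabs h * Rabs h * mn n n B * mn n n B * mn n n mid) *
     sum_f_R0 (fun k => / INR (fact k) * (4 * (mn n n A0 + mn n n B + 1)) ^ k) (S N).
Proof. intros Hh Hcomm. set (c := mn n n A0 + mn n n B + 1).
  assert (Ha : 0 <= mn n n A0) by apply mn_nonneg. assert (Hb : 0 <= mn n n B) by apply mn_nonneg.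
  assert (Hm : 0 <= mn n n mid) by apply mn_nonneg. assert (Hc : 1 <= c) by (unfold c; lra).
  pose proof (Rabs_pos h).
  set (s := Rabs h * Rabs h * mn n n B * mn n n B * mn n n mid).
  assert (Hs : 0 <= s) by (unfold s; repeat apply Rmult_le_pos; auto).
  assert (Hterm : forall k, 0 <= / INR (fact k) * (4 * c) ^ k).
  { intros k. apply Rmult_le_pos. apply Rlt_le, Rinv_0_lt_compat, INR_fact_lt_0.
    apply pow_le; lra. }
  induction N.
  - rewrite Y_zero, mn_mz. apply Rmult_le_pos; auto. apply sum_nonneg; auto.
  - rewrite Y_step. eapply Rle_trans. apply mn_add. rewrite mn_rscal.
    rewrite (tech5 _ (S N)).
    pose proof (R_bound n A0 B h (S (S N)) Hh Hcomm) as H0. fold c s in H0.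
    pose proof (INR_sq_le_pow4 (S (S N))).
    assert (Hf : 0 < / INR (fact (S (S N)))) by apply Rinv_0_lt_compat, INR_fact_lt_0.
    rewrite Rabs_right by lra.
    assert (mn n n (Rk n A0 B h (S (S N))) <= s * (4 * c) ^ (S (S N))).
    { eapply Rle_trans. apply H0. rewrite Rpow_mult_distr.
      pose proof (pow_le c (S (S N)) ltac:(lra)).
      replace (INR (S (S N)) ^ 2 * s * c ^ S (S N)) with (INR (S (S N)) ^ 2 * (s * c ^ S (S N))) by ring.
      replace (s * (4 ^ S (S N) * c ^ S (S N))) with (4 ^ S (S N) * (s * c ^ S (S N))) by ring.
      apply Rmult_le_compat_r. apply Rmult_le_pos; auto. apply INR_sq_le_pow4. }
    assert (/ INR (fact (S (S N))) * mn n n (Rk n A0 B h (S (S N))) <=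
            s * (/ INR (fact (S (S N))) * (4 * c) ^ S (S N))).
    { rewrite <- Rmult_assoc, (Rmult_comm s), Rmult_assoc. apply Rmult_le_compat_l; lra. }
    lra. Qed.


Lemma Xi_deriv n A0 B X0 (X : R -> Mat) :
  meq n n (mmul n A0 B) (mmul n B A0) -> is_mexp n A0 X0 ->
  (forall h, is_mexp n (madd A0 (mrscal h B)) (X h)) ->
  mlim0 n n (fun h => mrscal (/ h) (msub (X h) X0)) (mmul n B X0).
Proof. intros Hcomm HX0 HX.
  set (c := mn n n A0 + mn n n B + 1).
  set (K := mn n n B * mn n n B * mn n n mid * exp (4 * c)).
  assert (Ha : 0 <= mn n n A0) by apply mn_nonneg. assert (Hb : 0 <= mn n n B) by apply mn_nonneg.
  assert (Hm : 0 <= mn n n mid) by apply mn_nonneg. assert (Hc : 1 <= c) by (unfold c; lra).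
  assert (HK : 0 <= K) by (unfold K; repeat apply Rmult_le_pos; auto; apply Rlt_le, exp_pos).
  assert (HT : forall h, Rabs h <= 1 ->
    mn n n (msub (msub (X h) X0) (mrscal h (mmul n B X0))) <= Rabs h * Rabs h * K).
  { intros h Hh. apply le_eps; intros eps He.
    destruct (is_mexp_mcv _ _ _ (HX h) (eps/3)) as [N1 G1]; try lra.
    destruct (is_mexp_mcv _ _ _ HX0 (eps/3)) as [N2 G2]; try lra.
    destruct (is_mexp_mcv _ _ _ HX0 (eps/(3 * (mn n n B + 1)))) as [N3 G3].
    apply Rdiv_lt_0_compat; lra.
    set (N := Nat.max N1 (Nat.max N2 N3)).
    specialize (G1 (S N) ltac:(unfold N; lia)). specialize (G2 (S N) ltac:(unfold N; lia)).
    specialize (G3 N ltac:(unfold N; lia)).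
    assert (Heq : msub (msub (X h) X0) (mrscal h (mmul n B X0)) =
      madd (Yk n A0 B h N) (madd (mneg (msub (mexp_partial n (madd A0 (mrscal h B)) (S N)) (X h)))
        (madd (msub (mexp_partial n A0 (S N)) X0) (mrscal h (mmul n B (msub (mexp_partial n A0 N) X0)))))).
    { unfold Yk. rewrite mmul_subr. Mring. }
    rewrite Heq. clear Heq.
    pose proof (Y_bound n A0 B h N Hh Hcomm) as HY. fold c in HY.
    pose proof (exp_partial_le (4 * c) (S N) ltac:(lra)) as Hexp.
    assert (HY2 : mn n n (Yk n A0 B h N) <= Rabs h * Rabs h * K).
    { eapply Rle_trans. apply HY. unfold K.
      replace (Rabs h * Rabs h * (mn n n B * mn n n B * mn n n mid * exp (4 * c))) with
        (Rabs h * Rabs h * mn n n B * mn n n B * mn n n mid * exp (4 * c)) by ring.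
      apply Rmult_le_compat_l; auto. pose proof (Rabs_pos h). repeat apply Rmult_le_pos; auto. }
    eapply Rle_trans. apply mn_add. eapply Rle_trans. apply Rplus_le_compat_l. apply mn_add.
    eapply Rle_trans. apply Rplus_le_compat_l. apply Rplus_le_compat_l. apply mn_add.
    rewrite mn_neg, mn_rscal.
    pose proof (mn_mul n n n B (msub (mexp_partial n A0 N) X0)) as G4.
    assert (G5 : mn n n B * mn n n (msub (mexp_partial n A0 N) X0) <= eps / 3).
    { apply Rle_trans with (mn n n B * (eps / (3 * (mn n n B + 1)))).
      apply Rmult_le_compat_l; lra.
      apply Rle_trans with ((mn n n B + 1) * (eps / (3 * (mn n n B + 1)))).
      apply Rmult_le_compat_r. apply Rlt_le, Rdiv_lt_0_compat; lra. lra.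
      right; field; lra. }
    pose proof (Rabs_pos h).
    assert (Rabs h * mn n n (mmul n B (msub (mexp_partial n A0 N) X0)) <= eps / 3).
    { apply Rle_trans with (1 * (eps/3)). apply Rmult_le_compat; auto. apply mn_nonneg. lra. lra. }
    lra. }
  unfold mlim0. apply (small_le _ (fun h => K * Rabs h) 1 Rlt_0_1).
  - intros h Hh Hh1.
    replace (msub (mrscal (/ h) (msub (X h) X0)) (mmul n B X0)) with
      (mrscal (/ h) (msub (msub (X h) X0) (mrscal h (mmul n B X0)))).
    2:{ apply Mext; intros; unfold msub, madd, mneg, mrscal. apply Cext; Csimp; field; auto. }
    rewrite mn_rscal. rewrite Rabs_inv.
    pose proof (HT h ltac:(lra)). pose proof (Rabs_pos_lt h Hh).
    apply Rle_trans with (/ Rabs h * (Rabs h * Rabs h * K)).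
    apply Rmult_le_compat_l; auto. apply Rlt_le, Rinv_0_lt_compat; auto.
    right; field; lra.
  - apply small_scal; auto. apply small_abs. Qed.


Notation "A ** B" := (mmul _ A B) (at level 40, right associativity, only printing).

Ltac mnorm := repeat rewrite ?mmul_addl, ?mmul_addr, ?mmul_subl, ?mmul_subr, ?mmul_negl, ?mmul_negr, ?mmul_assoc.
Ltac meq_ring := intros ? ? _ _; unfold msub, madd, mneg, mrscal, mz; Ceq.

Lemma cancel_lX n A B X : meq n n (mmul n A B) mid -> meq n n (mmul n A (mmul n B X)) X.
Proof. intros H. rewrite <- mmul_assoc, H. apply mid_l. Qed.

Lemma ZW_comm n Z W : meq n n (mmul n W (madd mid (mmul n Z Z))) mid ->
  meq n n (mmul n (madd mid (mmul n Z Z)) W) mid -> meq n n (mmul n Z W) (mmul n W Z).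
Proof. intros HWQ HQW.
  assert (H1 : meq n n (mmul n Z W) (mmul n (mmul n W (madd mid (mmul n Z Z))) (mmul n Z W))).
  { rewrite HWQ, mid_l. reflexivity. }
  assert (H2 : meq n n (mmul n W Z) (mmul n W (mmul n Z (mmul n (madd mid (mmul n Z Z)) W)))).
  { rewrite HQW, mid_r. reflexivity. }
  rewrite H1, H2. mnorm. rewrite !mid_l. reflexivity. Qed.

Lemma ZW_commX n Z W X : meq n n (mmul n Z W) (mmul n W Z) ->
  meq n n (mmul n Z (mmul n W X)) (mmul n W (mmul n Z X)).
Proof. intros H. rewrite <- !mmul_assoc, H. reflexivity. Qed.

Lemma key_id n S Z W E : E = madd (mmul n S Z) (mmul n Z S) ->
  meq n n (mmul n Z W) (mmul n W Z) ->
  meq n n (mmul n W (madd mid (mmul n Z Z))) mid ->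
  meq n n (mmul n (madd mid (mmul n Z Z)) W) mid ->
  meq n n (madd (mmul n Z (mmul n W (mmul n E (mmul n W Z)))) (mmul n W (mmul n E W)))
          (madd (mmul n Z (mmul n W S)) (mmul n S (mmul n W Z))).
Proof. intros HE HZW HWQ HQW.
  set (Q := madd mid (mmul n Z Z)) in *.
  transitivity (madd (mmul n W (mmul n Q (mmul n S (mmul n Z W)))) (mmul n W (mmul n Z (mmul n S (mmul n Q W))))).
  - subst E. mnorm. rewrite <- HZW.
    rewrite (ZW_commX n Z W (mmul n S (mmul n Z (mmul n Z W))) HZW).
    rewrite (ZW_commX n Z W (mmul n Z (mmul n S (mmul n Z W))) HZW).
    unfold Q. mnorm. rewrite !mid_l. meq_ring.
  - rewrite (cancel_lX n W Q _ HWQ), HQW, mid_r.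
    rewrite (ZW_commX n Z W S HZW), <- HZW. meq_ring. Qed.

Lemma core_id n S T Z W E : E = madd (mmul n S Z) (mmul n Z S) ->
  meq n n (mmul n S T) mid -> meq n n (mmul n T S) mid ->
  meq n n (mmul n W (madd mid (mmul n Z Z))) mid ->
  meq n n (mmul n (madd mid (mmul n Z Z)) W) mid ->
  let a0 := msub (mmul n Z (mmul n T Z)) T in
  let b0 := madd (mmul n T Z) (mmul n Z T) in
  meq n n (madd (mmul n a0 (mmul n W (mmul n E (mmul n W a0))))
                (mmul n b0 (mmul n W (mmul n E (mmul n W b0))))) b0.
Proof. intros HE HST HTS HWQ HQW a0 b0.
  pose proof (ZW_comm n Z W HWQ HQW) as HZW.
  set (Q := madd mid (mmul n Z Z)) in *.
  assert (ZZWX : forall X, meq n n (mmul n Z (mmul n Z (mmul n W X))) (msub X (mmul n W X))).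
  { intros X. transitivity (msub (mmul n Q (mmul n W X)) (mmul n mid (mmul n W X))).
    unfold Q; mnorm; meq_ring. rewrite (cancel_lX n Q W _ HQW), mid_l. reflexivity. }
  assert (WZZX : forall X, meq n n (mmul n W (mmul n Z (mmul n Z X))) (msub X (mmul n W X))).
  { intros X. transitivity (msub (mmul n W (mmul n Q X)) (mmul n W (mmul n mid X))).
    unfold Q; mnorm; meq_ring. rewrite (cancel_lX n W Q _ HWQ), mid_l. reflexivity. }
  assert (HC : meq n n b0 (mmul n T (mmul n E T))).
  { rewrite HE. mnorm. rewrite (cancel_lX n T S _ HTS), HST, mid_r. unfold b0; meq_ring. }
  assert (HA : forall X, meq n n (mmul n a0 (mmul n W X))
      (msub (mmul n T (mmul n E (mmul n T (mmul n Z (mmul n W X))))) (mmul n T X))).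
  { intros X. rewrite HE. mnorm. rewrite (cancel_lX n T S _ HTS), (cancel_lX n S T _ HST).
    rewrite (ZZWX X). unfold a0. mnorm. meq_ring. }
  assert (HB : meq n n (mmul n W a0) (msub (mmul n W (mmul n Z (mmul n T (mmul n E T)))) T)).
  { rewrite HE. mnorm. rewrite (cancel_lX n T S _ HTS), HST, mid_r.
    rewrite (WZZX T). unfold a0. mnorm. meq_ring. }
  assert (Hin : meq n n (mmul n T (mmul n (madd (mmul n Z (mmul n W (mmul n E (mmul n W Z))))
       (mmul n W (mmul n E W))) T)) (madd (mmul n T (mmul n Z W)) (mmul n W (mmul n Z T)))).
  { rewrite (key_id n S Z W E HE HZW HWQ HQW). mnorm.
    rewrite HST, mid_r, (cancel_lX n T S _ HTS). meq_ring. }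
  rewrite (HA (mmul n E (mmul n W a0))). rewrite HB. rewrite HC.
  transitivity (madd (msub (mmul n T (mmul n E (mmul n (mmul n T (mmul n (madd (mmul n Z (mmul n W (mmul n E (mmul n W Z))))
       (mmul n W (mmul n E W))) T)) (mmul n E T))))
       (mmul n T (mmul n E (mmul n (madd (mmul n T (mmul n Z W)) (mmul n W (mmul n Z T))) (mmul n E T)))))
       (mmul n T (mmul n E T))).
  - mnorm. meq_ring.
  - rewrite Hin. meq_ring. Qed.

Lemma WZZX_gen n Z W X : meq n n (mmul n W (madd mid (mmul n Z Z))) mid ->
  meq n n (mmul n W (mmul n Z (mmul n Z X))) (msub X (mmul n W X)).
Proof. intros HWQ. transitivity (msub (mmul n W (mmul n (madd mid (mmul n Z Z)) X)) (mmul n W (mmul n mid X))).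
  mnorm; meq_ring. rewrite (cancel_lX n W _ _ HWQ), mid_l. reflexivity. Qed.
Lemma ZZWX_gen n Z W X : meq n n (mmul n (madd mid (mmul n Z Z)) W) mid ->
  meq n n (mmul n Z (mmul n Z (mmul n W X))) (msub X (mmul n W X)).
Proof. intros HQW. transitivity (msub (mmul n (madd mid (mmul n Z Z)) (mmul n W X)) (mmul n mid (mmul n W X))).
  mnorm; meq_ring. rewrite (cancel_lX n _ W _ HQW), mid_l. reflexivity. Qed.

Lemma qcore n T X0 W0 Z0 : meq n n (mmul n T X0) (mmul n X0 T) ->
  meq n n (mmul n W0 (madd mid (mmul n Z0 Z0))) mid ->
  meq n n (madd (mmul n (mneg T) (mmul n X0 W0))
     (mmul n X0 (mmul n W0 (mmul n (madd (mmul n Z0 (mmul n T Z0)) (mmul n Z0 (mmul n Z0 T))) W0))))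
   (mmul n X0 (mmul n W0 (mmul n (msub (mmul n Z0 (mmul n T Z0)) T) W0))).
Proof. intros HTX HWQ. mnorm. rewrite (ZW_commX n T X0 W0 HTX).
  rewrite (WZZX_gen n Z0 W0 (mmul n T W0) HWQ). mnorm. meq_ring. Qed.

Lemma pcore n T X0 W0 Z0 K : meq n n (mmul n T X0) (mmul n X0 T) ->
  meq n n (mmul n W0 (madd mid (mmul n Z0 Z0))) mid ->
  meq n n (mmul n (madd mid (mmul n Z0 Z0)) W0) mid ->
  (forall Y, mmul n K (mmul n X0 Y) = mmul n Z0 Y) ->
  meq n n (mneg (madd (madd (mmul n (mneg T) (mmul n X0 (mmul n K (mmul n X0 W0))))
                             (mmul n X0 (mmul n K (mmul n (mneg T) (mmul n X0 W0)))))
                       (mmul n X0 (mmul n K (mmul n X0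
                          (mmul n W0 (mmul n (madd (mmul n Z0 (mmul n T Z0)) (mmul n Z0 (mmul n Z0 T))) W0)))))))
   (mmul n X0 (mmul n W0 (mmul n (madd (mmul n T Z0) (mmul n Z0 T)) W0))).
Proof. intros HTX HWQ HQW HZ.
  pose proof (ZW_comm n Z0 W0 HWQ HQW) as HZW.
  set (Q := madd mid (mmul n Z0 Z0)) in *.
  rewrite !mmul_negl, !mmul_negr. rewrite ?HZ. mnorm.
  rewrite (ZW_commX n T X0 _ HTX). rewrite (ZW_commX n T X0 _ HTX). rewrite ?HZ.
  rewrite (WZZX_gen n Z0 W0 (mmul n T W0) HWQ). mnorm.
  rewrite (ZW_commX n Z0 W0 (mmul n Z0 (mmul n T (mmul n Z0 W0))) HZW).
  rewrite (ZW_commX n Z0 W0 (mmul n T W0) HZW).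
  symmetry.
  transitivity (madd (msub (mmul n X0 (mmul n W0 (mmul n Q (mmul n T (mmul n Z0 W0)))))
                           (mmul n X0 (mmul n W0 (mmul n Z0 (mmul n Z0 (mmul n T (mmul n Z0 W0)))))))
                     (mmul n X0 (mmul n W0 (mmul n Z0 (mmul n T W0))))).
  - unfold Q. mnorm. rewrite mid_l. meq_ring.
  - rewrite (cancel_lX n W0 Q _ HWQ). mnorm. meq_ring. Qed.

Lemma sandwich r n c (U X Y V : Mat) : meq n n X Y ->
  meq r c (mmul n U (mmul n X V)) (mmul n U (mmul n Y V)).
Proof. intros H. rewrite H. reflexivity. Qed.

Lemma final_core n X0 W0 a0 b0 G E :
  (forall Y, meq n n (mmul n G (mmul n X0 Y)) (mmul n E Y)) ->
  meq n n (madd (mmul n a0 (mmul n W0 (mmul n E (mmul n W0 a0))))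
                (mmul n b0 (mmul n W0 (mmul n E (mmul n W0 b0))))) b0 ->
  meq n n (madd (mmul n (mmul n X0 (mmul n W0 (mmul n a0 W0))) (mmul n G (mmul n X0 (mmul n W0 (mmul n a0 W0)))))
                (mmul n (mmul n X0 (mmul n W0 (mmul n b0 W0))) (mmul n G (mmul n X0 (mmul n W0 (mmul n b0 W0))))))
          (mmul n X0 (mmul n W0 (mmul n b0 W0))).
Proof. intros HGX Hc. mnorm. rewrite !HGX.
  transitivity (mmul n X0 (mmul n W0 (mmul n (madd (mmul n a0 (mmul n W0 (mmul n E (mmul n W0 a0))))
                (mmul n b0 (mmul n W0 (mmul n E (mmul n W0 b0))))) W0))).
  - mnorm. meq_ring.
  - rewrite Hc. reflexivity. Qed.


Theorem mainTheorem2
  (m M : nat) (S Sinv U V K : Mat) (p0 : R -> Mat)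
  (Xi W : R -> R -> Mat) (Dom : R -> R -> Prop) :
  is_inverse M S Sinv ->
  meq M M (madd (mmul M S K) (mmul M K S)) (mmul m V U) ->
  (forall x y,
     is_mexp M (mneg (madd (mrscal x S) (mrscal y Sinv))) (Xi x y)) ->
  open2 Dom ->
  (forall x y, Dom x y ->
     is_inverse M (madd mid (mpow M (mmul M K (Xi x y)) 2)) (W x y)) ->
  forall x y, Dom x y ->
    exists qy py : Mat,
      has_pderiv_y m m (q_sol M U V Xi W) x y qy /\
      has_pderiv_y m m (p_sol M p0 U V K Xi W) x y py /\
      meq m m (madd (mmul m qy qy) (mmul m py py)) py.
Proof.
  intros [HST HTS] HG HXi Hopen HWinv x y Hxy.
  pose (A0 := mneg (madd (mrscal x S) (mrscal y Sinv))).
  pose (Bm := mneg Sinv).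
  assert (HSA : meq M M (mmul M S A0) (mmul M A0 S)).
  { unfold A0. rewrite ?mmul_negr, ?mmul_negl, ?mmul_addr, ?mmul_addl, ?mmul_scalr, ?mmul_scall.
    rewrite HST, HTS. reflexivity. }
  assert (HTA : meq M M (mmul M Sinv A0) (mmul M A0 Sinv)).
  { unfold A0. rewrite ?mmul_negr, ?mmul_negl, ?mmul_addr, ?mmul_addl, ?mmul_scalr, ?mmul_scall.
    rewrite HST, HTS. reflexivity. }
  assert (HAB : meq M M (mmul M A0 Bm) (mmul M Bm A0)).
  { unfold A0, Bm. rewrite ?mmul_negr, ?mmul_negl, ?mmul_addr, ?mmul_addl, ?mmul_scalr, ?mmul_scall.
    rewrite HST, HTS. reflexivity. }
  pose proof (comm_Xi M S A0 (Xi x y) HSA (HXi x y)) as HSX.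
  pose proof (comm_Xi M Sinv A0 (Xi x y) HTA (HXi x y)) as HTX.
  assert (HdXi : dd M M (Xi x) y (mmul M Bm (Xi x y))).
  { unfold dd, dq. apply (Xi_deriv M A0 Bm (Xi x y) (fun h => Xi x (y + h))); [exact HAB | exact (HXi x y) |].
    intros h. replace (madd A0 (mrscal h Bm)) with (mneg (madd (mrscal x S) (mrscal (y + h) Sinv)))
      by (unfold A0, Bm; Mring). apply HXi. }
  destruct (Hopen x y Hxy) as [eps [Heps Hball]].
  assert (Hnear : forall h, Rabs h < eps -> Dom x (y + h)).
  { intros h Hh. apply Hball. unfold Rabs in Hh. destruct (Rcase_abs h); nra. }
  pose proof (dd_mul M M M (fun _ => K) (Xi x) y _ _ (dd_const M M K y) HdXi) as HdZ.
  pose proof (dd_mul M M M (fun t => mmul M K (Xi x t)) (fun _ => mid) y _ _ HdZ (dd_const M M mid y)) as HdZ1.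
  pose proof (dd_mul M M M (fun t => mmul M K (Xi x t)) (fun t => mmul M (mmul M K (Xi x t)) mid) y _ _ HdZ HdZ1) as HdP.
  pose proof (dd_add M M (fun _ => mid) _ y _ _ (dd_const M M mid y) HdP) as HdB.
  cbv beta in HdB.
  pose proof (dd_inv M (fun t => madd mid (mpow M (mmul M K (Xi x t)) 2)) (W x) y _ eps Heps
     (fun h Hh => HWinv x (y + h) (Hnear h Hh)) HdB) as HdW.
  pose proof (HWinv x y Hxy) as [HBW HWB].
  set (X0 := Xi x y) in *. set (W0 := W x y) in *.
  assert (HZ : forall Y, mmul M K (mmul M X0 Y) = mmul M (mmul M K X0) Y)
    by (intros; rewrite mmul_assoc; reflexivity).
  set (Z0 := mmul M K X0) in *.
  assert (HWQ : meq M M (mmul M W0 (madd mid (mmul M Z0 Z0))) mid).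
  { rewrite <- HWB at 2. cbn [mpow]. rewrite (mid_r M Z0). reflexivity. }
  assert (HQW : meq M M (mmul M (madd mid (mmul M Z0 Z0)) W0) mid).
  { rewrite <- HBW at 2. cbn [mpow]. rewrite (mid_r M Z0). reflexivity. }
  pose (Wn := mmul M W0 (mmul M (madd (mmul M Z0 (mmul M Sinv Z0)) (mmul M Z0 (mmul M Z0 Sinv))) W0)).
  assert (HdWn : dd M M (W x) y Wn).
  { eapply dd_meq. exact HdW. unfold Wn, Bm.
    rewrite ?mmul_zl, ?mmul_zr, ?madd_zl, ?madd_zr, ?mmul_negl, ?mmul_negr.
    rewrite !mid_r. rewrite HTX, HZ. mnorm. meq_ring. }
  pose (a0 := msub (mmul M Z0 (mmul M Sinv Z0)) Sinv).
  pose (b0 := madd (mmul M Sinv Z0) (mmul M Z0 Sinv)).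
  exists (mmul M U (mmul M (mmul M X0 (mmul M W0 (mmul M a0 W0))) V)),
         (mmul M U (mmul M (mmul M X0 (mmul M W0 (mmul M b0 W0))) V)).
  pose proof (dd_mul m M M (fun _ => U) (Xi x) y _ _ (dd_const m M U y) HdXi) as H1.
  split; [|split].
  - apply dd_pderiv. unfold q_sol.
    pose proof (dd_mul m M M (fun t => mmul M U (Xi x t)) (W x) y _ _ H1 HdWn) as H2.
    pose proof (dd_mul m M m (fun t => mmul M (mmul M U (Xi x t)) (W x t)) (fun _ => V) y _ _ H2
       (dd_const M m V y)) as H3.
    cbv beta in H3. change (Xi x y) with X0 in H3. change (W x y) with W0 in H3. eapply dd_meq. exact H3.
    transitivity (mmul M U (mmul M (madd (mmul M Bm (mmul M X0 W0)) (mmul M X0 Wn)) V)).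
    { rewrite ?mmul_zl, ?mmul_zr, ?madd_zl, ?madd_zr. mnorm. meq_ring. }
    apply sandwich. unfold Bm, Wn, a0. apply qcore; auto.
  - apply dd_pderiv. unfold p_sol.
    pose proof (dd_mul m M M (fun t => mmul M U (Xi x t)) (fun _ => K) y _ _ H1 (dd_const M M K y)) as P2.
    pose proof (dd_mul m M M (fun t => mmul M (mmul M U (Xi x t)) K) (Xi x) y _ _ P2 HdXi) as P3.
    pose proof (dd_mul m M M (fun t => mmul M (mmul M (mmul M U (Xi x t)) K) (Xi x t)) (W x) y _ _ P3 HdWn) as P4.
    pose proof (dd_mul m M m (fun t => mmul M (mmul M (mmul M (mmul M U (Xi x t)) K) (Xi x t)) (W x t))
       (fun _ => V) y _ _ P4 (dd_const M m V y)) as P5.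
    pose proof (dd_sub m m (fun _ => p0 x) _ y _ _ (dd_const m m (p0 x) y) P5) as P6.
    cbv beta in P6. change (Xi x y) with X0 in P6. change (W x y) with W0 in P6. eapply dd_meq. exact P6.
    transitivity (mmul M U (mmul M (mneg (madd (madd (mmul M Bm (mmul M X0 (mmul M K (mmul M X0 W0))))
        (mmul M X0 (mmul M K (mmul M Bm (mmul M X0 W0))))) (mmul M X0 (mmul M K (mmul M X0 Wn))))) V)).
    { unfold msub. rewrite ?mmul_zl, ?mmul_zr, ?madd_zl, ?madd_zr. mnorm. meq_ring. }
    apply sandwich. unfold Bm, Wn, b0. apply pcore; auto.
  - transitivity (mmul M U (mmul M (madd
        (mmul M (mmul M X0 (mmul M W0 (mmul M a0 W0))) (mmul M (mmul m V U) (mmul M X0 (mmul M W0 (mmul M a0 W0)))))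
        (mmul M (mmul M X0 (mmul M W0 (mmul M b0 W0))) (mmul M (mmul m V U) (mmul M X0 (mmul M W0 (mmul M b0 W0))))))
        V)).
    { mnorm. meq_ring. }
    apply sandwich. rewrite <- HG.
    apply (final_core M X0 W0 a0 b0 _ (madd (mmul M S Z0) (mmul M Z0 S))).
    + intros Y. mnorm. rewrite HZ. rewrite (ZW_commX M S X0 Y HSX). rewrite HZ. mnorm. meq_ring.
    + apply (core_id M S Sinv Z0 W0 _ eq_refl HST HTS HWQ HQW).
Qed.
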